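(* Let $S$ and $S'$ be two TBLS searches with strict partial orders $\prec_S$ and $\prec_{S'}$ on $P_f(\mathbb{N}^+)$. Then the following are equivalent: (i) for every finite graph $G$, every $S'$-ordering of $G$ is also an $S$-ordering of $G$; (ii) for all $A,B\in P_f(\mathbb{N}^+)$, $A\prec_S B$ implies $A\prec_{S'} B$.
   Context: Let $G=(V,E)$ be a finite undirected graph with $n$ vertices; $N(v)$ denotes the set of neighbours of $v$. An ordering of $V$ is a bijection $\sigma:\{1,\dots,n\}\to V$; $\sigma(i)$ is the $i$th vertex. $P_f(\mathbb{N}^+)$ is the set of finite subsets of the positive integers. Given a strict partial order $\prec$ on $P_f(\mathbb{N}^+)$ and an ordering $\tau$ of $V$, the Tie-Breaking Label Search $\mathrm{TBLS}(G,\prec,\tau)$ is the procedure: set $label(v)=\emptyset$ for every $v$; for $i=1,\dots,n$: let Eligible be the set of unnumbered vertices $x$ such that there is no unnumbered vertex $y$ with $label(x)\prec label(y)$; let $v$ be the first vertex of Eligible in the ordering $\tau$; set $\sigma(i)=v$ ($v$ becomes numbered); for every unnumbered neighbour $w$ of $v$ replace $label(w)$ by $label(w)\cup\{i\}$. The output is $\sigma$. A TBLS search $S$ is specified by a strict partial order $\prec_S$ on $P_f(\mathbb{N}^+)$; an ordering $\sigma$ of $V$ is an $S$-ordering of $G$ if $\sigma=\mathrm{TBLS}(G,\prec_S,\tau)$ for some ordering $\tau$ of $V$. *)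

(* Defs.v *)
From HB Require Import structures.
From mathcomp Require Import all_boot finmap.
Set Implicit Arguments. Unset Strict Implicit. Unset Printing Implicit Defensive.
Open Scope fset_scope.

Definition pfset := {A : {fset nat} | 0%N \notin A}.

Definition strict_po (prec : rel pfset) : Prop :=
  irreflexive prec /\ transitive prec.

Definition simple_graph (T : finType) (e : rel T) : Prop :=
  symmetric e /\ irreflexive e.

Definition is_ordering (T : finType) (s : seq T) : bool :=
  uniq s && (size s == #|T|).

(* label of x when the vertices of s (s = sigma(1..k)) are numbered:
   { i in 1..k | sigma(i) is a neighbour of x } *)
Definition lab_raw (T : finType) (e : rel T) (s : seq T) (x : T) : {fset nat} :=
  [fset i.+1 | i in [seq i <- iota 0 (size s) | e (nth x s i) x]].

Lemma lab_raw_pos (T : finType) (e : rel T) (s : seq T) (x : T) :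
  0%N \notin lab_raw e s x.
Proof. by apply/imfsetP => -[i _]. Qed.

Definition lab (T : finType) (e : rel T) (s : seq T) (x : T) : pfset :=
  exist _ (lab_raw e s x) (lab_raw_pos e s x).

Definition eligible (T : finType) (prec : rel pfset) (e : rel T) (s : seq T) (x : T) : bool :=
  (x \notin s) && [forall y, (y \notin s) ==> ~~ prec (lab e s x) (lab e s y)].

Definition tbls_next (T : finType) (prec : rel pfset) (e : rel T) (tau s : seq T) : option T :=
  ohead [seq x <- tau | eligible prec e s x].

Fixpoint tbls_iter (T : finType) (prec : rel pfset) (e : rel T) (tau : seq T) (k : nat) (s : seq T) : seq T :=
  if k is k'.+1 then
    if tbls_next prec e tau s is Some v then tbls_iter prec e tau k' (rcons s v) else s
  else s.

Definition TBLS (T : finType) (prec : rel pfset) (e : rel T) (tau : seq T) : seq T :=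
  tbls_iter prec e tau #|T| [::].

Definition S_ordering (T : finType) (prec : rel pfset) (e : rel T) (sigma : seq T) : Prop :=
  exists tau, is_ordering tau /\ sigma = TBLS prec e tau.

(* Main.v *)
Require Import Defs.
From mathcomp Require Import all_boot finmap.

Section Gen.
Variables (T : finType) (prec : rel pfset) (e : rel T).

Definition prefok (tau s : seq T) :=
  forall p v q, s = p ++ v :: q -> tbls_next prec e tau p = Some v.

Lemma iter_pref tau s : prefok tau s ->
  forall k (p r : seq T), k <= size r -> s = p ++ r -> tbls_iter prec e tau k p = p ++ take k r.
Proof.
move=> H; elim=> [|k IH] p r Hk Hs /=; first by rewrite take0 cats0.
case: r Hk Hs => [|v r] //= Hk Hs.
by rewrite (H _ _ _ Hs) (IH (rcons p v) r) // ?cat_rcons // Hs -cats1 -catA.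
Qed.

Lemma TBLS_pref tau s : prefok tau s -> size s = #|T| -> TBLS prec e tau = s.
Proof.
move=> H Hs; by rewrite /TBLS (@iter_pref tau s H #|T| [::] s) ?Hs //= take_oversize // Hs.
Qed.

Definition elig_pref (s : seq T) :=
  forall p v q, s = p ++ v :: q -> eligible prec e p v.

Lemma iter_elig tau k s : elig_pref s -> elig_pref (tbls_iter prec e tau k s).
Proof.
elim: k s => [|k IH] s Hs //=.
case Hn: (tbls_next prec e tau s) => [v|] //; apply: IH.
have Hv : eligible prec e s v.
  have : v \in [seq x <- tau | eligible prec e s x].
    by move: Hn; rewrite /tbls_next; case: [seq x <- tau | eligible prec e s x] => [|w l] //= [<-]; rewrite inE eqxx.
  by rewrite mem_filter => /andP[].
move=> p w q; case/lastP: q => [|q z].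
  by rewrite cats1 => /rcons_inj [<- <-].
rewrite -rcons_cons -rcons_cat => /rcons_inj [E _]; exact: Hs E.
Qed.

Lemma TBLS_elig tau : elig_pref (TBLS prec e tau).
Proof. apply: iter_elig => p v q /(congr1 size); by rewrite size_cat /= addnS. Qed.

Lemma first_elig (s p q : seq T) v : s = p ++ v :: q -> uniq s ->
  eligible prec e p v -> tbls_next prec e s p = Some v.
Proof.
move=> Hs Hu Hv; rewrite /tbls_next Hs filter_cat.
have -> : [seq x <- p | eligible prec e p x] = [::].
  apply/eqP; rewrite -(negbK (_ == _)) -has_filter; apply/hasPn => x Hx.
  by rewrite /eligible Hx.
by rewrite /= Hv.
Qed.


Lemma exists_elig (s : seq T) y : strict_po prec -> y \notin s -> exists x, eligible prec e s x.
Proof.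
move=> [Hirr Htr] Hy.
pose F x := #|[set z | (z \notin s) && prec (lab e s x) (lab e s z)]|.
case: (@arg_minnP _ y (fun x => x \notin s) F Hy) => x Hx Hmin.
exists x; rewrite /eligible Hx /=; apply/forallP => z; apply/implyP => Hz; apply/negP => Hxz.
have := Hmin z Hz; apply/negP; rewrite -ltnNge; apply: proper_card; apply/properP; split.
  apply/subsetP => w; rewrite !inE => /andP[-> Hw] /=; exact: Htr Hxz Hw.
by exists z; rewrite !inE ?Hz ?Hxz ?Hirr.
Qed.

Lemma all_in (tau : seq T) : is_ordering tau -> forall y, y \in tau.
Proof.
case/andP => Hu /eqP Hs y.
have Hc : #|tau| = #|T| by rewrite (card_uniqP Hu).
have := subset_cardP Hc; rewrite subset_predT => /(_ isT) /(_ y).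
by rewrite [in RHS]inE => ->.
Qed.

Lemma iter_full tau : strict_po prec -> is_ordering tau -> forall k s, uniq s ->
  (size s + k)%N = #|T| -> uniq (tbls_iter prec e tau k s) /\ size (tbls_iter prec e tau k s) = #|T|.
Proof.
move=> Hpo Ht; elim=> [|k IH] s Hu Hs /=; first by rewrite addn0 in Hs.
have [y Hy] : exists y, y \notin s.
  apply/existsP; rewrite -negb_forall; apply/negP => /forallP Hall.
  have := uniq_leq_size (enum_uniq T) (fun z _ => Hall z).
  by rewrite -cardE -Hs addnS ltnNge leq_addr.
have [x Hx] := @exists_elig s y Hpo Hy.
case Hn: (tbls_next prec e tau s) => [v|].
  have : v \in [seq x <- tau | eligible prec e s x].
    by move: Hn; rewrite /tbls_next; case: [seq x <- tau | eligible prec e s x] => [|w l] //= [<-]; rewrite inE eqxx.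
  rewrite mem_filter => /andP[/andP[Hv _] _].
  by apply: IH; rewrite ?rcons_uniq ?Hv // size_rcons addSnnS.
move: Hn; rewrite /tbls_next.
have : x \in [seq x <- tau | eligible prec e s x] by rewrite mem_filter Hx all_in.
by case: [seq x <- tau | eligible prec e s x].
Qed.

End Gen.

Definition Rf (X : {fset nat}) (i : nat) : {fset nat} :=
  [fset j.+1 | j in [seq j <- iota 0 i | j.+1 \in X]].
Lemma Rf_pos X i : 0%N \notin Rf X i.
Proof. by apply/imfsetP => -[j _]. Qed.
Definition R X i : pfset := exist _ (Rf X i) (Rf_pos X i).

Lemma pf_eq (p q : pfset) : sval p = sval q -> p = q.
Proof.
case: p q => [p hp] [q hq] /= E; subst q; congr exist; exact: bool_irrelevance.
Qed.

Lemma Rf_full (X : pfset) n i : (forall x, x \in sval X -> (x <= n)%N) -> (n <= i)%N ->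
  Rf (sval X) i = sval X.
Proof.
case: X => X HX /= Hb Hi; apply/fsetP => x; apply/imfsetP/idP.
  by case=> j /=; rewrite mem_filter => /andP[Hj _] ->.
move=> Hx; case: x Hx => [|x] Hx; first by rewrite Hx in HX.
exists x => //=.
by rewrite mem_filter /= Hx mem_iota /= add0n (leq_trans (Hb _ Hx)).
Qed.

Section Con.
Variables (prec : rel pfset) (A B : pfset) (n : nat).
Hypothesis Hpo : strict_po prec.
Hypothesis HAB : ~~ prec A B.
Hypothesis HbA : forall x, x \in sval A -> (x <= n)%N.
Hypothesis HbB : forall x, x \in sval B -> (x <= n)%N.

Definition Sf (k : nat) : {fset nat} :=
  if (k < n)%N then (if prec (R (sval A) k) (R (sval B) k) then sval B else sval A)
  else if k == n then sval A else sval B.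

Definition N := n.+2.
Definition eg (u v : 'I_N) : bool :=
  if (val u < val v)%N then (val u).+1 \in Sf (val v)
  else if (val v < val u)%N then (val v).+1 \in Sf (val u) else false.

Lemma eg_simple : simple_graph eg.
Proof.
split; last by move=> u; rewrite /eg ltnn.
by move=> u v; rewrite /eg; case: (ltngtP (val u) (val v)).
Qed.

Definition sig := enum 'I_N.

Lemma dec_val p v q : sig = p ++ v :: q ->
  map val p = iota 0 (size p) /\ val v = size p.
Proof.
move=> Hs; have Hm := val_enum_ord N; rewrite -/sig Hs map_cat in Hm.
have Hsz : (size p < N)%N.
  have := congr1 size Hs; rewrite size_cat /= /sig size_enum_ord => E.
  by rewrite [X in (_ < X)%N]E addnS ltnS leq_addr.
split.
  have := congr1 (take (size p)) Hm; rewrite take_size_cat ?size_map // take_iota => ->.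
  by rewrite (minn_idPl (ltnW Hsz)).
have := congr1 (fun s => nth 0 s (size p)) Hm; rewrite nth_cat size_map ltnn subnn nth_iota //.
Qed.

Lemma mem_pref p v q y : sig = p ++ v :: q -> (y \in p) = (val y < size p)%N.
Proof.
move=> /dec_val [Hm _]; apply/idP/idP.
  by move=> Hy; have := map_f val Hy; rewrite Hm mem_iota.
move=> Hy; have : val y \in map val p by rewrite Hm mem_iota add0n.
by case/mapP => y' Hy' /val_inj ->.
Qed.

Lemma lab_eq p v q x : sig = p ++ v :: q -> (size p <= val x)%N ->
  lab eg p x = R (Sf (val x)) (size p).
Proof.
move=> /dec_val [Hm _] Hx; apply: pf_eq => /=; rewrite /lab_raw /Rf.
have -> // : [seq i <- iota 0 (size p) | eg (nth x p i) x] = [seq j <- iota 0 (size p) | j.+1 \in Sf (val x)].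
apply: eq_in_filter => j; rewrite mem_iota add0n /= => Hj.
have Hn : val (nth x p j) = j by rewrite -(nth_map _ 0) // Hm nth_iota.
by rewrite /eg Hn (leq_trans Hj Hx).
Qed.

Lemma Sf_AB k : Sf k = sval A \/ Sf k = sval B.
Proof. rewrite /Sf; case: ifP => _; [case: ifP => _|case: ifP => _]; by [left|right]. Qed.

Lemma RA : R (sval A) n = A.
Proof. by apply: pf_eq; rewrite /= (@Rf_full A n n HbA (leqnn n)). Qed.
Lemma RB : R (sval B) n = B.
Proof. by apply: pf_eq; rewrite /= (@Rf_full B n n HbB (leqnn n)). Qed.

Lemma key i T : (i <= n)%N -> (T = sval A \/ T = sval B) -> ~~ prec (R (Sf i) i) (R T i).
Proof.
case: Hpo => Hirr Htr.
rewrite leq_eqVlt => /orP [/eqP ->|Hi] HT.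
  rewrite /Sf ltnn eqxx RA; case: HT => E; subst T; by rewrite ?RA ?RB ?Hirr.
rewrite /Sf Hi; case Hc: (prec (R (sval A) i) (R (sval B) i)); case: HT => E; subst T; rewrite ?Hirr ?Hc //.
by apply/negP => H; have := Htr _ _ _ H Hc; rewrite Hirr.
Qed.

Lemma sig_elig p v q : sig = p ++ v :: q -> eligible prec eg p v.
Proof.
move=> Hs; have [_ Hv] := @dec_val p v q Hs.
rewrite /eligible (@mem_pref p v q _ Hs) Hv ltnn /=; apply/forallP => y; apply/implyP.
rewrite (@mem_pref p v q _ Hs) -leqNgt => Hy.
rewrite (@lab_eq p v q v Hs) ?Hv // (@lab_eq p v q y Hs Hy).
case: (eqVneq y v) => [E|Hyv]; first by (rewrite E Hv; case: Hpo => Hirr _; rewrite Hirr).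
rewrite -Hv; apply: key; last exact: Sf_AB.
have : (val v < val y)%N by rewrite ltn_neqAle Hv Hy andbT -Hv; apply: contra Hyv => /eqP /val_inj ->.
by have := ltn_ord y; rewrite /N => H1 H2; rewrite -ltnS (leq_trans H2) // -ltnS.
Qed.

Lemma sig_TBLS : TBLS prec eg sig = sig.
Proof.
apply: TBLS_pref; last by rewrite /sig size_enum_ord card_ord.
move=> p v q Hs; exact: (@first_elig _ prec eg sig p q v Hs (enum_uniq _) (@sig_elig p v q Hs)).
Qed.

End Con.

Theorem theorem1 (precS precS' : rel pfset) :
  strict_po precS -> strict_po precS' ->
  ((forall (T : finType) (e : rel T), simple_graph e ->
      forall sigma : seq T, S_ordering precS' e sigma -> S_ordering precS e sigma)
   <->
   (forall A B : pfset, precS A B -> precS' A B)).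
Proof.
move=> HS HS'; split.
- move=> H A B HAB; case Hb: (precS' A B) => //; exfalso.
  have HnAB : ~~ precS' A B by rewrite Hb.
  pose n := \max_(x <- (enum_fset (sval A) ++ enum_fset (sval B))) x.
  have HbA : forall x, x \in sval A -> (x <= n)%N.
    by move=> x Hx; apply: (@leq_bigmax_seq _ _ predT); rewrite ?mem_cat ?Hx.
  have HbB : forall x, x \in sval B -> (x <= n)%N.
    by move=> x Hx; apply: (@leq_bigmax_seq _ _ predT); rewrite ?mem_cat ?Hx ?orbT.
  have Hord : S_ordering precS' (eg precS' A B n) (sig n).
    exists (sig n); split.
      by rewrite /is_ordering /sig enum_uniq size_enum_ord card_ord eqxx.
    by rewrite (@sig_TBLS precS' A B n HS' HnAB HbA HbB).
  have [tau [_ Htau]] := H _ _ (@eg_simple precS' A B n) _ Hord.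
  have He := @TBLS_elig _ precS (eg precS' A B n) tau; rewrite -Htau in He.
  have Hlt : (n < N n)%N by rewrite /N ltnS leqnSn.
  have Hlt1 : (n.+1 < N n)%N by rewrite /N ltnS leqnn.
  pose v := Ordinal Hlt; pose b := Ordinal Hlt1.
  have Hsz : (n < size (sig n))%N by rewrite /sig size_enum_ord.
  have Hs : sig n = take n (sig n) ++ nth v (sig n) n :: drop n.+1 (sig n).
    by rewrite -drop_nth // cat_take_drop.
  have Hp : size (take n (sig n)) = n by rewrite size_take Hsz.
  have [_ Hv] := @dec_val n _ _ _ Hs.
  have /andP [_ /forallP /(_ b)] := He _ _ _ Hs.
  rewrite (@mem_pref n _ _ _ b Hs) Hp ltnNge leqnSn /=.
  rewrite (@lab_eq precS' A B n _ _ _ _ Hs) ?Hv // (@lab_eq precS' A B n _ _ _ b Hs) ?Hp ?Hv //=.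
  rewrite /Sf ltnn eqxx ltnNge leqnSn /= (gtn_eqF (ltnSn n)).
  by rewrite (@RA A n HbA) (@RB B n HbB) HAB.
- move=> Hinc T e _ sigma [tau [Ht ->]].
  have [Hu Hsz] := @iter_full T precS' e tau HS' Ht #|T| [::] isT erefl.
  exists (TBLS precS' e tau); split; first by rewrite /is_ordering Hu Hsz eqxx.
  symmetry; apply: TBLS_pref => //.
  move=> p v q Hs; apply: (@first_elig _ precS e _ p q v Hs Hu).
  have /andP [Hvp /forallP Hall] := @TBLS_elig _ precS' e tau p v q Hs.
  rewrite /eligible Hvp /=; apply/forallP => y; apply/implyP => Hy.
  apply: contra (implyP (Hall y) Hy); exact: Hinc.
Qed.
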